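(* Let $q=2$, and assume $A\cap B=\emptyset$, $|C|=m-1$ and $|A|\ge2$. Then the dual code $\mathcal C_{\overline{\mathcal N}_4}^\perp$ is a binary distance-optimal linear code with parameters $\left[2^{m+|A|+|B|}-2^{m+|B|},\ 2^{m+|A|+|B|}-2^{m+|B|}-m-2|A|-|B|,\ 4\right]$.
   Context: $\mathbb F_2$ is the binary field, $m\ge2$, $[m]=\{1,\dots,m\}$, $\mathrm{supp}(v)=\{i:v_i\ne0\}$. For nonempty $P\subseteq[m]$, $\Delta_P=\{v\in\mathbb F_2^m:\mathrm{supp}(v)\subseteq P\}$, $\Delta_P^c=\mathbb F_2^m\setminus\Delta_P$, $\Delta_P^*=\Delta_P\setminus\{\mathbf 0\}$. $A,B,C$ are nonempty subsets of $[m]$. Let $\mathcal N_4=\{(w_2+\omega,w_3,w_1)\in\mathbb F_2^{3m}: w_1\in\Delta_A^*,\ w_2\in\Delta_B,\ w_3\in\Delta_C^c,\ \omega\in\{\mathbf 0,w_1\}\}$, set $\overline{\mathcal N}_4=\mathcal N_4$ (over $\mathbb F_2$ each scalar class is a singleton), and let $\mathcal C_{\overline{\mathcal N}_4}$ be the binary linear code spanned by the rows of the $3m\times|\overline{\mathcal N}_4|$ matrix whose columns are the elements of $\overline{\mathcal N}_4$. $\mathcal C^\perp$ is the Euclidean dual. An $[n,k,d]$ code is distance-optimal if no linear $[n,k,d+1]$ code over the same field exists. *)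

(* Defs.v *)
(* Binary linear codes as row spaces of matrices over 'F_2. *)
From HB Require Import structures.
From mathcomp Require Import all_boot all_order all_algebra.
Set Implicit Arguments. Unset Strict Implicit. Unset Printing Implicit Defensive.
Import GRing.Theory.
Local Open Scope ring_scope.

Notation vec m := 'rV['F_2]_m.

Definition supp (m : nat) (v : vec m) : {set 'I_m} := [set i | v 0 i != 0].

Definition inDelta (m : nat) (P : {set 'I_m}) (v : vec m) : bool := supp v \subset P.

Definition N4 (m : nat) (A B C : {set 'I_m}) : {set vec (m + m + m)} :=
  [set x | [exists w1 : vec m, exists w2 : vec m, exists w3 : vec m, exists om : vec m,
     [&& inDelta A w1, w1 != 0, inDelta B w2, ~~ inDelta C w3,
         (om == 0) || (om == w1) &
         x == row_mx (row_mx (w2 + om) w3) w1]]].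

Definition genN4 (m : nat) (A B C : {set 'I_m}) : 'M['F_2]_(m + m + m, #|N4 A B C|) :=
  \matrix_(i, j) (@enum_val _ (mem (N4 A B C)) j) 0 i.

Definition dual_code (r n : nat) (G : 'M['F_2]_(r, n)) : 'M['F_2]_n := kermx G^T.

Definition wt (n : nat) (c : 'rV['F_2]_n) : nat := #|supp c|.

Definition min_dist (r n : nat) (M : 'M['F_2]_(r, n)) (d : nat) : Prop :=
  (exists2 c : 'rV['F_2]_n, (c <= M)%MS & (c != 0) && (wt c == d)) /\
  (forall c : 'rV['F_2]_n, (c <= M)%MS -> c != 0 -> (d <= wt c)%N).

Definition is_code_nkd (r n : nat) (M : 'M['F_2]_(r, n)) (k d : nat) : Prop :=
  \rank M = k /\ min_dist M d.

Definition no_better_code (n k d : nat) : Prop :=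
  ~ exists (r : nat) (M : 'M['F_2]_(r, n)), is_code_nkd M k d.+1.

Definition distance_optimal (r n : nat) (M : 'M['F_2]_(r, n)) (k d : nat) : Prop :=
  is_code_nkd M k d /\ no_better_code n k d.

(* Main.v *)
Require Import Defs.
From HB Require Import structures.
From mathcomp Require Import all_boot all_order all_algebra.
From mathcomp Require Import zify ring.
Set Implicit Arguments. Unset Strict Implicit. Unset Printing Implicit Defensive.
Import GRing.Theory.
Local Open Scope ring_scope.


Lemma F2_cases (x : 'F_2) : x = 0 \/ x = 1.
Proof. case: x => [[|[|k]]] //= Hk; [left|right]; exact: val_inj. Qed.
Lemma F2_11 : (1 + 1 : 'F_2) = 0. Proof. by apply/eqP. Qed.
Lemma F2_10 : (1 : 'F_2) != 0. Proof. by apply/eqP. Qed.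
Lemma F2_xx (x : 'F_2) : x + x = 0.
Proof. by case: (F2_cases x) => ->; rewrite ?addr0 ?F2_11. Qed.
Lemma vaddxx (p n : nat) (v : 'M['F_2]_(p,n)) : v + v = 0.
Proof. by apply/matrixP => i j; rewrite !mxE F2_xx. Qed.
Lemma F2_neq0 (x : 'F_2) : (x != 0) = (x == 1).
Proof. by case: (F2_cases x) => ->. Qed.

Lemma card_F2 : #|'F_2| = 2%N.
Proof. by rewrite card_Fp. Qed.

Lemma card_rowspace (n r : nat) (X : 'M['F_2]_(r,n)) :
  #|[set v : 'rV_n | (v <= X)%MS]| = (2 ^ \rank X)%N.
Proof.
have -> : [set v : 'rV_n | (v <= X)%MS] =
   [set u *m row_base X | u in 'rV_(\rank X)].
  apply/setP => v; rewrite inE; apply/idP/idP.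
    move=> vX; have /submxP[D ->] : (v <= row_base X)%MS by rewrite eq_row_base.
    by apply/imsetP; exists D.
  case/imsetP => u _ ->; have := submxMl u (row_base X); by rewrite eq_row_base.
rewrite card_imset; last exact: row_free_inj (row_base_free X).
by rewrite card_mx card_F2 mul1n.
Qed.


Lemma inDeltaP (m : nat) (S : {set 'I_m}) (v : vec m) :
  reflect (forall i, i \notin S -> v 0 i = 0) (inDelta S v).
Proof.
apply: (iffP subsetP) => [H i iS|H i].
  by apply/eqP; apply: contraNT iS => vi; apply: H; rewrite inE.
by rewrite inE; apply: contraR => iS; rewrite H.
Qed.

Definition Qm (m : nat) (S : {set 'I_m}) : 'M['F_2]_(#|S|, m) :=
  \matrix_(k < #|S|, j < m) ((@enum_val _ (mem S) k == j)%:R).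

Lemma sum_delta (m : nat) (S : {set 'I_m}) (f : 'I_#|S| -> 'F_2) (k0 : 'I_#|S|) :
  \sum_k f k * ((@enum_val _ (mem S) k == enum_val k0)%:R) = f k0.
Proof.
rewrite (bigD1 k0) //= eqxx mulr1 big1 ?addr0 // => k kk0.
by rewrite (inj_eq enum_val_inj) (negbTE kk0) mulr0.
Qed.

Lemma Qm_free (m : nat) (S : {set 'I_m}) : row_free (Qm S).
Proof.
rewrite -kermx_eq0; apply/eqP/matrixP => i k.
have := mulmx_ker (Qm S); set K := kermx _; move/matrixP/(_ i (enum_val k)).
rewrite [in X in X = _ -> _]mxE [in X in _ = X -> _]mxE.
rewrite (eq_bigr (fun k' => K i k' * ((enum_val k' == enum_val k)%:R))).
  by rewrite sum_delta => ->; rewrite mxE.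
by move=> k' _; rewrite [Qm S _ _]mxE.
Qed.

Lemma Qm_rank (m : nat) (S : {set 'I_m}) : \rank (Qm S) = #|S|.
Proof. by have /eqP := Qm_free S. Qed.

Lemma Qm_row (m : nat) (S : {set 'I_m}) k :
  row k (Qm S) = delta_mx 0 (enum_val k).
Proof. by apply/rowP => j; rewrite !mxE eqxx /= eq_sym. Qed.

Lemma Qm_sub (m : nat) (S : {set 'I_m}) (v : vec m) :
  (v <= Qm S)%MS = inDelta S v.
Proof.
apply/idP/idP.
  case/submxP => D ->; apply/inDeltaP => i iS; rewrite !mxE big1 // => k _.
  rewrite mxE; case: eqP => [ek|]; last by rewrite mulr0.
  by move: iS; rewrite -ek enum_valP.
move/inDeltaP => H; apply/submxP; exists (\row_k v 0 (enum_val k)).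
apply/rowP => j; rewrite !mxE.
case: (boolP (j \in S)) => jS.
  rewrite -{1}(enum_rankK_in jS jS).
  rewrite (eq_bigr (fun k => (\row_k v 0 (enum_val k)) 0 k * ((enum_val k == enum_val (enum_rank_in jS j))%:R))).
    by rewrite sum_delta mxE.
  by move=> k _; rewrite !mxE enum_rankK_in.
rewrite H // big1 // => k _; rewrite !mxE; case: eqP => [ek|]; last by rewrite mulr0.
by move: jS; rewrite -ek enum_valP.
Qed.

Lemma card_Delta (m : nat) (S : {set 'I_m}) :
  #|[set v : vec m | inDelta S v]| = (2 ^ #|S|)%N.
Proof.
rewrite -(Qm_rank S) -card_rowspace; apply: eq_card => v.
by rewrite !inE Qm_sub.
Qed.


Definition trip (m : nat) (y1 y2 y3 : vec m) : vec (m + m + m) := row_mx (row_mx y1 y2) y3.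

Lemma trip_split (m : nat) (x : vec (m + m + m)) :
  x = trip (lsubmx (lsubmx x)) (rsubmx (lsubmx x)) (rsubmx x).
Proof. by rewrite /trip !hsubmxK. Qed.

Lemma trip_inj (m : nat) (a1 a2 a3 b1 b2 b3 : vec m) :
  trip a1 a2 a3 = trip b1 b2 b3 -> [/\ a1 = b1, a2 = b2 & a3 = b3].
Proof. by case/eq_row_mx => /eq_row_mx [-> ->] ->. Qed.

Lemma trip_add (m : nat) (a1 a2 a3 b1 b2 b3 : vec m) :
  trip a1 a2 a3 + trip b1 b2 b3 = trip (a1 + b1) (a2 + b2) (a3 + b3).
Proof. by rewrite /trip !add_row_mx. Qed.

Lemma inDeltaD (m : nat) (S : {set 'I_m}) (u v : vec m) :
  inDelta S u -> inDelta S v -> inDelta S (u + v).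
Proof.
move=> /inDeltaP Hu /inDeltaP Hv; apply/inDeltaP => i iS.
by rewrite mxE Hu // Hv // addr0.
Qed.

Lemma inDeltaS (m : nat) (S T : {set 'I_m}) (v : vec m) :
  S \subset T -> inDelta S v -> inDelta T v.
Proof. by move=> ST SV; apply: subset_trans SV ST. Qed.

Lemma inDelta0 (m : nat) (S : {set 'I_m}) : inDelta S (0 : vec m).
Proof. by apply/inDeltaP => i _; rewrite mxE. Qed.

Lemma inDelta_delta (m : nat) (S : {set 'I_m}) t :
  t \in S -> inDelta S (delta_mx 0 t : vec m).
Proof.
move=> tS; apply/inDeltaP => i iS; rewrite mxE.
have -> : (i == t) = false by apply/eqP => it; move: iS; rewrite it tS.
by rewrite andbF.
Qed.

Lemma N4P (m : nat) (A B C : {set 'I_m}) (y1 y2 y3 : vec m) :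
  (trip y1 y2 y3 \in N4 A B C) =
  [&& inDelta A y3, y3 != 0, ~~ inDelta C y2 & inDelta B y1 || inDelta B (y1 + y3)].
Proof.
rewrite inE; apply/idP/idP.
  case/existsP => w1 /existsP [w2 /existsP [w3 /existsP [om]]].
  case/and5P => H1 H2 H3 H4 /andP [H5 /eqP /trip_inj [-> -> ->]].
  rewrite H1 H2 H4 /=; case/orP: H5 => /eqP ->; first by rewrite addr0 H3.
  by rewrite -addrA vaddxx addr0 H3 orbT.
case/and4P => H1 H2 H3 /orP [H4|H4].
  apply/existsP; exists y3; apply/existsP; exists y1; apply/existsP; exists y2.
  apply/existsP; exists 0; by rewrite H1 H2 H3 H4 eqxx addr0 /=.
apply/existsP; exists y3; apply/existsP; exists (y1 + y3); apply/existsP; exists y2.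
apply/existsP; exists y3; by rewrite H1 H2 H3 H4 eqxx orbT -addrA vaddxx addr0 /=.
Qed.


Lemma row_genN4 (m : nat) (A B C : {set 'I_m}) i :
  row i (genN4 A B C)^T = enum_val i.
Proof. by apply/rowP => j; rewrite !mxE. Qed.

Lemma N4_sub (m : nat) (A B C : {set 'I_m}) x :
  x \in N4 A B C -> (x <= (genN4 A B C)^T)%MS.
Proof.
move=> xN; rewrite -(enum_rankK_in xN xN) -row_genN4; exact: row_sub.
Qed.

Definition Pm (m : nat) (A B : {set 'I_m}) :
  'M['F_2]_(#|A :|: B| + m + #|A|, m + m + m) :=
  col_mx (col_mx (row_mx (row_mx (Qm (A :|: B)) 0) 0)
                 (row_mx (row_mx 0 1%:M) 0))
         (row_mx (row_mx 0 0) (Qm A)).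

Lemma Pm_mul (m : nat) (A B : {set 'I_m}) u1 u2 u3 :
  row_mx (row_mx u1 u2) u3 *m Pm A B = trip (u1 *m Qm (A :|: B)) u2 (u3 *m Qm A).
Proof.
rewrite /Pm !mul_row_col !mul_mx_row !mulmx0 mulmx1 /trip !add_row_mx.
by rewrite !addr0 !add0r.
Qed.

Lemma row_free_ker (p n : nat) (M : 'M['F_2]_(p,n)) :
  (forall u : 'rV_p, u *m M = 0 -> u = 0) -> row_free M.
Proof.
move=> H; rewrite -kermx_eq0; apply/eqP/row_matrixP => i; rewrite row0; apply: H.
by rewrite -row_mul mulmx_ker row0.
Qed.

Lemma Pm_free (m : nat) (A B : {set 'I_m}) : row_free (Pm A B).
Proof.
apply: row_free_ker => u.
rewrite -[u]hsubmxK -[lsubmx u]hsubmxK Pm_mul /trip => /eqP; rewrite !row_mx_eq0.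
case/andP => /andP [/eqP H1 /eqP H2] /eqP H3.
have Q1 := row_free_inj (Qm_free (A :|: B)).
have Q3 := row_free_inj (Qm_free A).
have -> : lsubmx (lsubmx u) = 0 by apply: Q1; rewrite H1 mul0mx.
have -> : rsubmx u = 0 by apply: Q3; rewrite H3 mul0mx.
by rewrite H2 !row_mx0.
Qed.

Lemma Pm_rank (m : nat) (A B : {set 'I_m}) : \rank (Pm A B) = (#|A :|: B| + m + #|A|)%N.
Proof. by have /eqP := Pm_free A B. Qed.

Lemma Pm_sub (m : nat) (A B : {set 'I_m}) y1 y2 y3 :
  inDelta (A :|: B) y1 -> inDelta A y3 -> (trip y1 y2 y3 <= Pm A B)%MS.
Proof.
rewrite -!Qm_sub => /submxP [D1 ->] /submxP [D3 ->].
by apply/submxP; exists (row_mx (row_mx D1 y2) D3); rewrite Pm_mul.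
Qed.


Notation e t := (delta_mx 0 t : vec _).

Lemma de (m : nat) (t i : 'I_m) : (e t : vec m) 0 i = (t == i)%:R.
Proof. by rewrite mxE eqxx eq_sym. Qed.

Lemma e_neq0 (m : nat) (t : 'I_m) : (e t : vec m) != 0.
Proof. by apply/eqP => /rowP /(_ t); rewrite de eqxx mxE; apply/eqP. Qed.

Lemma e_notC (m : nat) (C : {set 'I_m}) j0 : j0 \notin C -> ~~ inDelta C (e j0 : vec m).
Proof.
by move=> jC; apply/negP => /inDeltaP /(_ j0 jC); rewrite de eqxx; apply/eqP.
Qed.

Lemma e2_neq0 (m : nat) (a a' : 'I_m) : a != a' -> (e a + e a' : vec m) != 0.
Proof.
move=> aa; apply/eqP => /rowP /(_ a); rewrite mxE !de eqxx [a' == a]eq_sym (negbTE aa) addr0 mxE.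
by apply/eqP.
Qed.

Lemma e2_notC (m : nat) (C : {set 'I_m}) j0 t : j0 \notin C -> t != j0 ->
  ~~ inDelta C (e t + e j0 : vec m).
Proof.
move=> jC tj; apply/negP => /inDeltaP /(_ j0 jC); rewrite mxE !de eqxx (negbTE tj) add0r.
by apply/eqP.
Qed.

Lemma sub2 (p n : nat) (M : 'M['F_2]_(p, n)) (x y : 'rV_n) :
  (x <= M)%MS -> (y <= M)%MS -> ((x + y)%R <= M)%MS.
Proof. exact: addmx_sub. Qed.

Lemma E_eq_P (m : nat) (A B C : {set 'I_m}) j0 a a' :
  j0 \notin C -> a \in A -> a' \in A -> a != a' ->
  ((genN4 A B C)^T == Pm A B)%MS.
Proof.
move=> jC aA a'A aa.
set E := (genN4 A B C)^T.
have N4s := @N4_sub m A B C.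
have eA := @inDelta_delta m A.
have mem0 : forall w1, inDelta A w1 -> w1 != 0 -> trip 0 (e j0) w1 \in N4 A B C.
  move=> w1 H1 H2; rewrite N4P H1 H2 e_notC //=; by rewrite inDelta0.
have Z : (trip 0 (e j0) 0 <= E)%MS.
  have -> : trip 0 (e j0) 0 = trip 0 (e j0) (e a) + trip 0 (e j0) (e a')
                                + trip 0 (e j0) (e a + e a').
    by rewrite !trip_add !addr0 vaddxx add0r vaddxx.
  apply: sub2; [apply: sub2|]; apply: N4s; apply: mem0; rewrite ?eA ?e_neq0 //.
    exact: inDeltaD (eA _ aA) (eA _ a'A).
  exact: e2_neq0.
apply/andP; split.
  apply/row_subP => i; rewrite row_genN4.
  have := enum_valP i; rewrite [enum_val i]trip_split N4P.
  case/and4P => H1 _ _ H4; apply: Pm_sub => //.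
  case/orP: H4 => H4.
    by apply: (inDeltaS _ H4); exact: subsetUr.
  rewrite -[lsubmx _](addrK (rsubmx (enum_val i))).
  apply: inDeltaD; first by apply: (inDeltaS _ H4); exact: subsetUr.
  have -> : - rsubmx (enum_val i) = rsubmx (enum_val i).
    by apply/eqP; rewrite eq_sym -addr_eq0 vaddxx.
  by apply: (inDeltaS _ H1); exact: subsetUl.
rewrite /Pm !col_mx_sub; apply/andP; split; first (apply/andP; split).
- apply/row_subP => k; rewrite !row_row_mx !row0 Qm_row.
  have := enum_valP k; set t := enum_val k; rewrite inE => /orP [tA|tB].
    have -> : row_mx (row_mx (e t) 0) 0 = trip (e t) (e j0) (e t) + trip 0 (e j0) (e t).
      by rewrite trip_add vaddxx addr0 vaddxx.
    apply: sub2; apply: N4s; last exact: mem0 (eA _ tA) (e_neq0 _).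
    by rewrite N4P eA // e_neq0 e_notC //= vaddxx inDelta0 orbT.
  have -> : row_mx (row_mx (e t) 0) 0 = trip (e t) (e j0) (e a) + trip 0 (e j0) (e a).
    by rewrite trip_add vaddxx addr0 vaddxx.
  apply: sub2; apply: N4s; last exact: mem0 (eA _ aA) (e_neq0 _).
  by rewrite N4P eA // e_neq0 e_notC //= inDelta_delta.
- apply/row_subP => t; rewrite !row_row_mx !row0 row1.
  case: (eqVneq t j0) => [->|tj]; first exact: Z.
  have -> : row_mx (row_mx 0 (e t)) 0 = trip 0 (e t + e j0) (e a) + trip 0 (e j0) (e a).
    by rewrite trip_add add0r -addrA !vaddxx addr0.
  apply: sub2; apply: N4s; last exact: mem0 (eA _ aA) (e_neq0 _).
  by rewrite N4P eA // e_neq0 e2_notC //= inDelta0.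
- apply/row_subP => k; rewrite !row_row_mx !row0 Qm_row.
  have tA := enum_valP k; set t := enum_val k in tA *.
  have -> : row_mx (row_mx 0 0) (e t) = trip 0 (e j0) (e t) + trip 0 (e j0) 0.
    by rewrite trip_add addr0 vaddxx addr0.
  apply: sub2; last exact: Z.
  by apply: N4s; exact: mem0 (eA _ tA) (e_neq0 _).
Qed.

Lemma rank_genN4 (m : nat) (A B C : {set 'I_m}) j0 a a' :
  j0 \notin C -> a \in A -> a' \in A -> a != a' ->
  \rank (genN4 A B C) = (#|A :|: B| + m + #|A|)%N.
Proof.
move=> H1 H2 H3 H4; by rewrite -mxrank_tr (eqmx_rank (E_eq_P B H1 H2 H3 H4)) Pm_rank.
Qed.


Lemma natF2 (n : nat) : (n%:R : 'F_2) = (odd n)%:R.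
Proof.
elim: n => // n IH; rewrite mulrS IH /=.
by case: (odd n); rewrite /= ?F2_11 ?addr0 //; apply/eqP.
Qed.

Lemma sum_F2 (n : nat) (c : 'rV['F_2]_n) : \sum_i c 0 i = (wt c)%:R.
Proof.
rewrite (bigID (fun i => c 0 i != 0)) /= [X in _ + X]big1; last first.
  by move=> i; rewrite negbK => /eqP.
rewrite addr0 (eq_bigr (fun _ => 1)); last by move=> i; rewrite F2_neq0 => /eqP.
rewrite sumr_const /wt /supp; congr (_ *+ _); apply: eq_card => i; by rewrite inE.
Qed.

Lemma F2_2 (x : 'F_2) (p q : bool) : ~~ (p && q) -> (x != 0) = p || q -> x = p%:R + q%:R.
Proof.
case: (F2_cases x) => ->; case: p; case: q => //= _; rewrite ?eqxx //= ?F2_11 ?addr0 ?add0r //.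
Qed.

Lemma wt_eq0 (n : nat) (c : 'rV['F_2]_n) : wt c = 0%N -> c = 0.
Proof.
move/eqP; rewrite /wt cards_eq0 => /eqP H; apply/rowP => i; rewrite mxE.
apply/eqP; apply: contraT => ci.
have : i \in supp c by rewrite inE.
by rewrite H inE.
Qed.

Lemma N4_J (m : nat) (A B C : {set 'I_m}) j0 (Cj0 : forall i, (i \notin C) = (i == j0)) x :
  x \in N4 A B C -> x 0 (lshift m (rshift m j0)) = 1.
Proof.
move=> xN; have H := xN; rewrite [x]trip_split N4P in H; case/and4P: H => _ _ H3 _.
have -> : x 0 (lshift m (rshift m j0)) = rsubmx (lsubmx x) 0 j0 by rewrite !mxE.
apply/eqP; rewrite -F2_neq0; apply: contraR H3 => H; apply/inDeltaP => i.
by rewrite Cj0 => /eqP ->; apply/eqP; rewrite negbK in H.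
Qed.

Lemma dual_lower (m : nat) (A B C : {set 'I_m}) j0 (Cj0 : forall i, (i \notin C) = (i == j0))
  (c : 'rV['F_2]_#|N4 A B C|) :
  (c <= kermx (genN4 A B C)^T)%MS -> c != 0 -> (4 <= wt c)%N.
Proof.
move=> /sub_kermxP cE cnz.
have ev : ~~ odd (wt c).
  move/rowP: (cE) => /(_ (lshift m (rshift m j0))); rewrite !mxE.
  rewrite (eq_bigr (fun i => c 0 i)); last first.
    by move=> i _; rewrite !mxE (N4_J Cj0 (enum_valP i)) mulr1.
  by rewrite sum_F2 natF2; case: (odd _) => //; move/eqP; rewrite (negbTE F2_10).
have w0 : wt c != 0%N by apply: contra cnz => /eqP /wt_eq0 ->.
have w2 : wt c != 2%N.
  apply/negP => /cards2P [i [j [ij sij]]].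
  have ce : c = delta_mx 0 i + delta_mx 0 j.
    apply/rowP => k; rewrite !mxE !eqxx /=.
    move/setP: (sij) => /(_ k); rewrite !inE /=.
    apply: F2_2; apply: contra ij => /andP [/eqP e1 /eqP e2]; by rewrite -e1 -e2.
  move: cE; rewrite ce mulmxDl -!rowE !row_genN4 => /eqP; rewrite addr_eq0.
  have -> : - enum_val j = enum_val j by apply/eqP; rewrite eq_sym -addr_eq0 vaddxx.
  by move/eqP/enum_val_inj => /eqP; rewrite (negbTE ij).
move: ev w0 w2; case: (wt c) => [|[|[|[|]]]] //.
Qed.


Lemma F2_4 (p1 p2 p3 p4 : bool) :
  ~~ (p1 && p2) -> ~~ (p1 && p3) -> ~~ (p1 && p4) -> ~~ (p2 && p3) -> ~~ (p2 && p4) ->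
  ~~ (p3 && p4) ->
  ((p1%:R + p2%:R + p3%:R + p4%:R : 'F_2) != 0) = [|| p1, p2, p3 | p4].
Proof. by case: p1; case: p2; case: p3; case: p4 => //=; rewrite ?addr0 ?add0r. Qed.

Lemma card4 (T : finType) (i1 i2 i3 i4 : T) :
  i1 != i2 -> i1 != i3 -> i1 != i4 -> i2 != i3 -> i2 != i4 -> i3 != i4 ->
  #|[set i1; i2; i3; i4]| = 4%N.
Proof.
move=> d12 d13 d14 d23 d24 d34.
have -> : [set i1; i2; i3; i4] = i1 |: (i2 |: (i3 |: [set i4])).
  by apply/setP => x; rewrite !inE !orbA.
rewrite !cardsU1 cards1 !inE (negbTE d12) (negbTE d13) (negbTE d14) (negbTE d23).
by rewrite (negbTE d24) (negbTE d34).
Qed.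

Lemma dual_w4 (m : nat) (A B C : {set 'I_m}) j0 a b :
  j0 \notin C -> a \in A -> b \in B -> a != b ->
  exists2 c : 'rV['F_2]_#|N4 A B C|, (c <= kermx (genN4 A B C)^T)%MS & (c != 0) && (wt c == 4%N).
Proof.
move=> jC aA bB ab.
set u := (e j0 : vec m).
set x1 := trip 0 u (e a); set x2 := trip (e a) u (e a).
set x3 := trip (e b) u (e a); set x4 := trip (e b + e a) u (e a).
have Hu : ~~ inDelta C u by exact: e_notC.
have HA : inDelta A (e a) by exact: inDelta_delta.
have N1 : x1 \in N4 A B C by rewrite N4P HA e_neq0 Hu inDelta0.
have N2 : x2 \in N4 A B C by rewrite N4P HA e_neq0 Hu vaddxx inDelta0 orbT.
have N3 : x3 \in N4 A B C by rewrite N4P HA e_neq0 Hu inDelta_delta.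
have N4' : x4 \in N4 A B C.
  by rewrite N4P HA e_neq0 Hu -addrA vaddxx addr0 inDelta_delta ?orbT.
pose r := enum_rank_in N1.
have rK : {in N4 A B C, cancel r enum_val} := enum_rankK_in N1.
have rinj : {in N4 A B C &, injective r} := can_in_inj rK.
have ent : forall (y1 y2 y3 : vec m) t, trip y1 y2 y3 0 (lshift m (lshift m t)) = y1 0 t.
  by move=> *; rewrite /trip !row_mxEl.
have dx : forall x y, x \in N4 A B C -> y \in N4 A B C -> x != y -> r x != r y.
  move=> x y xN yN; apply: contra => /eqP; move/(rinj _ _ xN yN) => ->; by [].
have F01 : (1 : 'F_2) != 0 := F2_10.
have ea : (e a : vec m) 0 a = 1 by rewrite de eqxx.
have eb : (e b : vec m) 0 b = 1 by rewrite de eqxx.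
have eab : (e a : vec m) 0 b = 0 by rewrite de (negbTE ab).
have eba : (e b : vec m) 0 a = 0 by rewrite de eq_sym (negbTE ab).
have z0 : forall t, (0 : vec m) 0 t = 0 by move=> t; rewrite mxE.
have dif : forall (y1 y2 y3 z1 z2 z3 : vec m) t, y1 0 t != z1 0 t -> trip y1 y2 y3 != trip z1 z2 z3.
  move=> y1 y2 y3 z1 z2 z3 t H; apply: contra H => /eqP H.
  by case/trip_inj: H => -> _ _.
have d12 : r x1 != r x2 by apply: dx => //; apply: (dif _ _ _ _ _ _ a); rewrite z0 ea eq_sym.
have d13 : r x1 != r x3 by apply: dx => //; apply: (dif _ _ _ _ _ _ b); rewrite z0 eb eq_sym.
have d14 : r x1 != r x4.
  by apply: dx => //; apply: (dif _ _ _ _ _ _ a); rewrite z0 [X in _ != X]mxE ea eba add0r eq_sym.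
have d23 : r x2 != r x3 by apply: dx => //; apply: (dif _ _ _ _ _ _ a); rewrite ea eba.
have d24 : r x2 != r x4.
  by apply: dx => //; apply: (dif _ _ _ _ _ _ b); rewrite [X in _ != X]mxE eb eab addr0 eq_sym.
have d34 : r x3 != r x4.
  by apply: dx => //; apply: (dif _ _ _ _ _ _ a); rewrite [X in _ != X]mxE eba ea add0r.
exists (e (r x1) + e (r x2) + e (r x3) + e (r x4)).
  apply/sub_kermxP; rewrite !mulmxDl -!rowE !row_genN4 !rK //.
  rewrite /x1 /x2 /x3 /x4 !trip_add.
  have v4 : forall v : vec m, v + v + v + v = 0 by move=> v; rewrite vaddxx add0r vaddxx.
  rewrite !v4 add0r [e b + e a]addrC vaddxx /trip; apply/eqP; by rewrite !row_mx_eq0 !eqxx.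
have sc : supp (e (r x1) + e (r x2) + e (r x3) + e (r x4)) = [set r x1; r x2; r x3; r x4].
  apply/setP => k; rewrite !inE !mxE eqxx /= F2_4; first by rewrite !orbA.
  1-6: apply/negP => /andP [/eqP e1 /eqP e2].
  1-6: first [by move: d12; rewrite -e1 -e2 eqxx | by move: d13; rewrite -e1 -e2 eqxx
             | by move: d14; rewrite -e1 -e2 eqxx | by move: d23; rewrite -e1 -e2 eqxx
             | by move: d24; rewrite -e1 -e2 eqxx | by move: d34; rewrite -e1 -e2 eqxx].
rewrite /wt sc card4 // andbT; apply/eqP => c0.
by move: sc; rewrite c0 => /setP /(_ (r x1)); rewrite !inE eqxx mxE.
Qed.


Lemma sumb_card (T : finType) (P : pred T) : (\sum_x (P x : nat))%N = #|[set x | P x]|.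
Proof. rewrite -sum1dep_card [RHS]big_mkcond /=; apply: eq_bigr => x _; by case: (P x). Qed.

Lemma card_notDelta (m : nat) (C : {set 'I_m}) :
  (\sum_(y : vec m) (~~ inDelta C y : nat))%N = (2 ^ m - 2 ^ #|C|)%N.
Proof.
rewrite sumb_card -(card_Delta C).
have -> : [set y : vec m | ~~ inDelta C y] = ~: [set y | inDelta C y].
  by apply/setP => y; rewrite !inE.
by rewrite cardsCs setCK card_mx card_F2 mul1n.
Qed.

Lemma sum_Delta (m : nat) (B : {set 'I_m}) :
  (\sum_(y : vec m) (inDelta B y : nat))%N = (2 ^ #|B|)%N.
Proof. by rewrite sumb_card card_Delta. Qed.

Lemma sum_or (m : nat) (A B : {set 'I_m}) (y3 : vec m) :
  A :&: B = set0 -> inDelta A y3 -> y3 != 0 ->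
  (\sum_(y1 : vec m) (inDelta B y1 || inDelta B (y1 + y3) : nat))%N = (2 * 2 ^ #|B|)%N.
Proof.
move=> AB HA nz.
have disj : forall y1, ~~ (inDelta B y1 && inDelta B (y1 + y3)).
  move=> y1; apply/negP => /andP [H1 H2].
  have HB : inDelta B y3.
    have := inDeltaD H1 H2; by rewrite addrA vaddxx add0r.
  move/negP: nz; apply; apply/eqP/rowP => i; rewrite mxE.
  move/inDeltaP: HA => HA; move/inDeltaP: HB => HB.
  case: (boolP (i \in A)) => iA; last by rewrite HA.
  apply: HB; apply/negP => iB.
  have : i \in A :&: B by rewrite inE iA iB.
  by rewrite AB inE.
rewrite (eq_bigr (fun y1 => inDelta B y1 + inDelta B (y1 + y3))%N); last first.
  by move=> y1 _; have := disj y1; case: (inDelta B y1); case: (inDelta B _).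
rewrite big_split /= sum_Delta.
rewrite (reindex (fun y => y + y3)) /=; last first.
  by apply: onW_bij; exists (fun y => y + y3) => y; rewrite -addrA vaddxx addr0.
rewrite (eq_bigr (fun y => inDelta B y : nat)); last first.
  by move=> y _; rewrite -addrA vaddxx addr0.
by rewrite sum_Delta mul2n addnn.
Qed.

Definition trip3 (m : nat) (x : vec m * vec m * vec m) := trip x.1.1 x.1.2 x.2.

Lemma trip3_inj (m : nat) : injective (@trip3 m).
Proof. by case=> [[a1 a2] a3] [[b1 b2] b3]; rewrite /trip3 /= => /trip_inj [-> -> ->]. Qed.

Lemma cardN4_sum (m : nat) (A B C : {set 'I_m}) :
  #|N4 A B C| = (\sum_(y1 : vec m) \sum_(y2 : vec m) \sum_(y3 : vec m)
     ([&& inDelta A y3, y3 != 0%R, ~~ inDelta C y2 & inDelta B y1 || inDelta B (y1 + y3)] : nat))%N.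
Proof.
rewrite pair_bigA /= pair_bigA /=.
under eq_bigr do rewrite -N4P.
rewrite sumb_card -(card_imset _ (@trip3_inj m)).
apply: eq_card => x; apply/idP/imsetP.
  move=> xN; exists ((lsubmx (lsubmx x), rsubmx (lsubmx x)), rsubmx x).
    by rewrite inE /= -trip_split.
  exact: trip_split.
by case=> p; rewrite inE => H ->.
Qed.

Lemma cardN4_val (m : nat) (A B C : {set 'I_m}) :
  A :&: B = set0 ->
  #|N4 A B C| = ((2 ^ #|A| - 1) * ((2 ^ m - 2 ^ #|C|) * (2 * 2 ^ #|B|)))%N.
Proof.
move=> AB; rewrite cardN4_sum exchange_big /=.
rewrite (eq_bigr (fun y2 => (~~ inDelta C y2) *
   \sum_(y3 : vec m) ((inDelta A y3 && (y3 != 0%R)) * (2 * 2 ^ #|B|)))%N); last first.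
  move=> y2 _; rewrite exchange_big big_distrr /=; apply: eq_bigr => y3 _.
  case: (boolP (inDelta A y3 && (y3 != 0%R))) => [/andP [H1 H2]|H].
    rewrite mul1n -(sum_or AB H1 H2) big_distrr /=; apply: eq_bigr => y1 _.
    by rewrite H1 H2 /=; case: (inDelta C y2); rewrite ?mul1n ?mul0n.
  rewrite mul0n muln0 big1 // => y1 _.
  by move: H; case: (inDelta A y3); case: (y3 != 0%R).
rewrite -big_distrl /= card_notDelta -big_distrl /= sumb_card.
rewrite mulnCA; congr (_ * _)%N.
have -> : [set x : vec m | inDelta A x && (x != 0%R)] = [set x | inDelta A x] :\ 0%R.
  by apply/setP => x; rewrite !inE andbC.
by rewrite -(card_Delta A) (cardsD1 0%R [set x | inDelta A x]) inE inDelta0 add1n subn1.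
Qed.


Lemma F2_natr_inj (b1 b2 : bool) : (b1%:R : 'F_2) = b2%:R -> b1 = b2.
Proof. by case: b1; case: b2 => // /eqP. Qed.

Lemma hamming (n r h : nat) (M : 'M['F_2]_(r, n)) : (h + h <= n)%N ->
  (forall c : 'rV_n, (c <= M)%MS -> c != 0 -> (5 <= wt c)%N) ->
  (h * h <= 2 ^ (n - \rank M))%N.
Proof.
move=> hh Hd.
pose lo (i : 'I_h) : 'I_n := widen_ord hh (lshift h i).
pose hi (j : 'I_h) : 'I_n := widen_ord hh (rshift h j).
have lohi : forall i j, (lo i == hi j) = false.
  move=> i j; apply/negbTE; rewrite -(inj_eq val_inj) /= neq_ltn.
  by rewrite (leq_trans (ltn_ord i)) // leq_addr.
have loi : injective lo by move=> i i' /(congr1 val) /= /val_inj.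
have hii : injective hi by move=> i i' /(congr1 val) /= /addnI /val_inj.
pose g (p : 'I_h * 'I_h) : 'rV['F_2]_n := e (lo p.1) + e (hi p.2).
have glo : forall p i, g p 0 (lo i) = (p.1 == i)%:R.
  by move=> p i; rewrite mxE !de [hi _ == _]eq_sym lohi addr0 (inj_eq loi).
have ghi : forall p j, g p 0 (hi j) = (p.2 == j)%:R.
  by move=> p j; rewrite mxE !de lohi add0r (inj_eq hii).
have ginj : injective g.
  case=> i1 j1 [i2 j2] E.
  have H1 := glo (i1, j1) i1; rewrite E glo eqxx in H1.
  have H2 := ghi (i1, j1) j1; rewrite E ghi eqxx in H2.
  by move/F2_natr_inj/eqP: H1 => /= ->; move/F2_natr_inj/eqP: H2 => /= ->.
pose F p := g p *m cokermx M.
have Finj : injective F.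
  move=> p q /eqP; rewrite -subr_eq0 -mulmxBl => /eqP H.
  have sub : (g p - g q <= M)%MS by rewrite submxE H.
  apply: ginj; apply/eqP; rewrite -subr_eq0; apply: contraT => nz.
  suff H4 : (wt (g p - g q) <= 4)%N by have := Hd _ sub nz; rewrite leqNgt ltnS H4.
  have -> : g p - g q = e (lo p.1) + e (hi p.2) + e (lo q.1) + e (hi q.2).
    have -> : - g q = g q by apply/eqP; rewrite eq_sym -addr_eq0 vaddxx.
    by rewrite addrA.
  apply: (leq_trans (subset_leq_card (B := mem [:: lo p.1; hi p.2; lo q.1; hi q.2]) _)).
    apply/subsetP => k; rewrite inE !mxE !inE eqxx /=.
    by apply: contraR; rewrite !negb_or => /and4P [/negbTE -> /negbTE -> /negbTE -> /negbTE ->]; rewrite !addr0.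
  exact: card_size.
have : (#|[set F p | p : 'I_h * 'I_h]| <= #|[set w : 'rV_n | (w <= cokermx M)%MS]|)%N.
  apply: subset_leq_card; apply/subsetP => w /imsetP [p _ ->]; rewrite inE.
  exact: submxMl.
by rewrite card_imset // card_prod card_ord card_rowspace mxrank_coker.
Qed.

Local Close Scope ring_scope.
Unset Implicit Arguments.
Set Strict Implicit.

Theorem mainTheorem16 (m : nat) (A B C : {set 'I_m}) :
  (2 <= m)%N -> A != set0 -> B != set0 -> C != set0 ->
  A :&: B = set0 -> #|C| = (m - 1)%N -> (2 <= #|A|)%N ->
  #|N4 A B C| = (2 ^ (m + #|A| + #|B|) - 2 ^ (m + #|B|))%N /\
  distance_optimal (dual_code (genN4 A B C))
    (2 ^ (m + #|A| + #|B|) - 2 ^ (m + #|B|) - m - 2 * #|A| - #|B|)%N 4.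
Proof.
move=> hm hA hB hC AB cC a2.
have [j0 Cj0] : exists j0, forall i, (i \notin C) = (i == j0).
  have : #|~: C| == 1%N.
    by have := cardsC C; rewrite card_ord cC => H; apply/eqP; lia.
  by case/cards1P => j0 E; exists j0 => i; rewrite -in_setC E inE.
have jC : j0 \notin C by rewrite Cj0.
have [a [a' [aA a'A aa']]] : exists a a', [/\ a \in A, a' \in A & a != a'].
  by apply/card_gt1P.
have [b bB] := set0Pn _ hB.
have ab : a != b.
  apply/eqP => eab; have : a \in A :&: B by rewrite inE aA eab bB.
  by rewrite AB inE.
have b1 : (1 <= #|B|)%N by rewrite card_gt0.
set X := (2 ^ #|A|)%N; set Y := (2 ^ (m - 1))%N; set Z := (2 ^ #|B|)%N.
have X4 : (4 <= X)%N by rewrite /X (leq_exp2l 2 _ (isT : (1 < 2)%N)).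
have Y2 : (2 <= Y)%N by rewrite /Y (leq_exp2l 1 _ (isT : (1 < 2)%N)); lia.
have Z2 : (2 <= Z)%N by rewrite /Z (leq_exp2l 1 _ (isT : (1 < 2)%N)).
have e2m : (2 ^ m = 2 * Y)%N by rewrite /Y -expnS; congr (_ ^ _); lia.
have Ncard : #|N4 A B C| = ((X - 1) * (2 * Y * Z))%N.
  rewrite cardN4_val // cC -/X -/Y -/Z e2m.
  have -> : (2 * Y - Y = Y)%N by lia.
  congr (_ * _)%N; by rewrite mulnCA mulnA.
have Nval : #|N4 A B C| = (2 ^ (m + #|A| + #|B|) - 2 ^ (m + #|B|))%N.
  rewrite Ncard !expnD e2m -/X -/Z mulnBl mul1n; congr (_ - _)%N.
  by rewrite mulnC -!mulnA [X * _]mulnC.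
split => //.
have rk : \rank (genN4 A B C) = (#|A| + #|B| + m + #|A|)%N.
  by rewrite (rank_genN4 _ jC aA a'A aa') cardsU AB cards0 subn0.
split.
  split.
    rewrite /dual_code mxrank_ker mxrank_tr rk Nval; lia.
  split.
    exact: dual_w4 jC aA bB ab.
  exact: dual_lower Cj0.
move=> [r' [M' [rkM [_ md]]]].
have hh : ((X - 1) * Y * Z + (X - 1) * Y * Z <= #|N4 A B C|)%N.
  by rewrite Ncard; apply: eq_leq; ring.
have := hamming hh md.
rewrite rkM.
have le : (#|N4 A B C| - (2 ^ (m + #|A| + #|B|) - 2 ^ (m + #|B|) - m - 2 * #|A| - #|B|)
            <= m + #|A| + #|A| + #|B|)%N by rewrite Nval; lia.
move=> H; have := leq_trans H (leq_pexp2l (isT : (0 < 2)%N) le).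
rewrite !expnD e2m -/X -/Z => H2.
have W4 : (4 <= Y * Z)%N by apply: (leq_mul Y2 Z2).
set W := (Y * Z)%N in W4.
have E1 : ((X - 1) * Y * Z * ((X - 1) * Y * Z) = ((X - 1) * (X - 1) * W) * W)%N by rewrite /W; ring.
have E2 : (2 * Y * X * X * Z = (2 * X * X) * W)%N by rewrite /W; ring.
rewrite E1 E2 leq_pmul2r ?(leq_trans _ W4) // in H2; rename H2 into H3.
have H4 : ((X - 1) * (X - 1) * 4 <= 2 * X * X)%N.
  by apply: leq_trans H3; rewrite leq_mul2l W4 orbT.
nia.
Qed.
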